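(* Let $\mathcal{D}$ be a small category, $X:\mathcal{D}\to\mathbf{Set}_*$ a diagram of pointed sets, $A$ an abelian group and $\rho:(\lim_\mathcal{D}X)\wedge A\to\lim_\mathcal{D}(X\wedge A)$ the natural map. Then: (1) If $A$ is $m$-bounded ($mA=0$) then $\ker\rho$ and $\mathrm{coker}\,\rho$ are $m$-bounded. (2) If $A$ is uniquely divisible then $\ker\rho$ and $\mathrm{coker}\,\rho$ are uniquely divisible. (3) If $A$ is almost uniquely divisible then $\ker\rho$ and $\mathrm{coker}\,\rho$ are almost uniquely divisible (in particular cotorsion).
   Context: For a pointed set $Y$ (base point $*$) and abelian group $A$, $Y\wedge A:=\bigoplus_{Y\setminus\{*\}}A$; its elements are pointed maps $y:Y\to A$ with finite support. For $s\in Y$, $v\in A$, $sv$ denotes the element with value $v$ at $s$ and $0$ elsewhere ($*v=0$). A pointed map $f:Y\to Z$ induces $f_*:Y\wedge A\to Z\wedge A$, $f_*(sv)=f(s)v$. The natural map $\rho$ satisfies $\rho(xv)(d)=x(d)v$ for $x\in\lim_\mathcal{D}X$, $v\in A$, $d\in\mathcal{D}$. An abelian group is almost uniquely divisible if it is the direct sum of a uniquely divisible group and a bounded group. A group $C$ is cotorsion if $\mathrm{Ext}(\mathbb{Q},C)=0$. *)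

(* Defs.v *)
From HB Require Import structures.
From mathcomp Require Import all_boot all_order all_algebra.
From mathcomp Require Import boolp classical_sets functions.
From Stdlib Require List.
Set Implicit Arguments. Unset Strict Implicit. Unset Printing Implicit Defensive.
Import Order.TTheory GRing.Theory.
Local Open Scope ring_scope.

Record category := Category {
  Obj :> Type;
  Hom : Obj -> Obj -> Type;
  idm : forall a, Hom a a;
  comp : forall a b e, Hom b e -> Hom a b -> Hom a e;
  comp1m : forall a b (f : Hom a b), comp (idm b) f = f;
  compm1 : forall a b (f : Hom a b), comp f (idm a) = f;
  compA : forall a b e e' (h : Hom e e') (g : Hom b e) (f : Hom a b),
      comp h (comp g f) = comp (comp h g) f }.
Arguments idm {c} a.
Arguments comp {c a b e} _ _.

Record pdiagram (C : category) := PDiagram {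
  ob :> Obj C -> Type;
  pt : forall d, ob d;
  fmap : forall d d', Hom d d' -> ob d -> ob d';
  fmap_pt : forall d d' (f : Hom d d'), fmap f (pt d) = pt d';
  fmap_id : forall d (x : ob d), fmap (idm d) x = x;
  fmap_comp : forall a b e (g : Hom b e) (f : Hom a b) (x : ob a),
      fmap (comp g f) x = fmap g (fmap f x) }.
Arguments pt {C} X d : rename.
Arguments fmap {C} X {d d'} f x : rename.

Section Smash.
Variables (C : category) (X : pdiagram C) (A : zmodType).

(* families x = (x_d)_d ; the compatible ones form lim_D X *)
Definition lfamily := forall d : Obj C, X d.
Definition compatible (x : lfamily) :=
  forall d d' (f : Hom d d'), fmap X f (x d) = x d'.
Definition basefam : lfamily := fun d => pt X d.

Definition fin_supp (T : Type) (u : T -> A) :=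
  exists s : list T, forall t, u t != 0 -> List.In t s.
Definition covers (T : Type) (u : T -> A) (s : list T) :=
  List.NoDup s /\ forall t, u t != 0 -> List.In t s.

(* (lim_D X) /\ A : finitely supported pointed maps lim_D X -> A, encoded as
   maps on all families that vanish off compatible families. *)
Definition limsmash (u : lfamily -> A) :=
  [/\ u basefam = 0, (forall x, u x != 0 -> compatible x) & fin_supp u].

(* lim_D (X /\ A): a lfamily (w_d)_d, w_d in X d /\ A, encoded uncurried as
   w : {d & X d} -> A, compatible with the induced maps f_*. *)
Definition fam_smash := {d : Obj C & X d} -> A.
Definition comp_d (w : fam_smash) d : X d -> A := fun p => w (existT _ d p).
Arguments comp_d w d : clear implicits.

Definition pushes d d' (f : Hom d d') (y : X d -> A) (z : X d' -> A) :=
  z (pt X d') = 0 /\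
  forall p' : X d', p' <> pt X d' ->
    forall s, covers y s -> z p' = \sum_(p <- s | `[< fmap X f p = p' >]) y p.

Definition limXA (w : fam_smash) :=
  (forall d, comp_d w d (pt X d) = 0 /\ fin_supp (comp_d w d)) /\
  (forall d d' (f : Hom d d'), pushes f (comp_d w d) (comp_d w d')).

(* the natural map rho : (lim X) /\ A -> lim (X /\ A), as its graph:
   rho(u)_d = sum_x u(x) . x_d  (determined by rho(x v)(d) = x(d) v). *)
Definition rho_graph (u : lfamily -> A) (w : fam_smash) :=
  forall d, comp_d w d (pt X d) = 0 /\
    forall p : X d, p <> pt X d ->
      forall s, covers u s -> w (existT _ d p) = \sum_(x <- s | `[< x d = p >]) u x.

Definition ker_rho (u : lfamily -> A) := limsmash u /\ rho_graph u (fun _ => 0).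
Definition im_rho (w : fam_smash) := exists u, limsmash u /\ rho_graph u w.
End Smash.

Section Subquotient.
Variable G : zmodType.
Definition subgroup (S : G -> Prop) := S 0 /\ forall x y, S x -> S y -> S (x - y).

Definition sq_bounded (m : nat) (K H : G -> Prop) := forall k, K k -> H (k *+ m).
Definition sq_bddd (K H : G -> Prop) := exists m, (0 < m)%N /\ sq_bounded m K H.
Definition sq_uniq_div (K H : G -> Prop) :=
  forall n, (0 < n)%N ->
    (forall k, K k -> exists k', K k' /\ H (k' *+ n - k)) /\
    (forall k1 k2, K k1 -> K k2 -> H (k1 *+ n - k2 *+ n) -> H (k1 - k2)).
(* K/H almost uniquely divisible: K/H = U/H (+) B/H (internal direct sum),
   U/H uniquely divisible, B/H bounded. *)
Definition sq_almost_ud (K H : G -> Prop) :=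
  exists U B : G -> Prop,
    [/\ subgroup U /\ subgroup B,
        (forall x, H x -> U x /\ B x) /\ (forall x, U x \/ B x -> K x),
        (forall k, K k -> exists u b, [/\ U u, B b & k = u + b]),
        (forall x, U x -> B x -> H x) &
        sq_uniq_div U H /\ sq_bddd B H].

(* the group G itself (= G/0) *)
Definition whole (x : G) := True.
Definition zero_sg (x : G) := x = 0.
End Subquotient.

(* Main.v *)
Require Import Defs.
From HB Require Import structures.
From mathcomp Require Import all_boot all_order all_algebra.
From mathcomp Require Import boolp classical_sets functions.
From Stdlib Require List.
Set Implicit Arguments. Unset Strict Implicit.
Import GRing.Theory.
Local Open Scope ring_scope.

Section Gen.
Variable A : zmodType.

Definition ddec (T : Type) (x y : T) : {x = y} + {x <> y} := pselect (x = y).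

Lemma fin_cover T (f : T -> A) : fin_supp f -> exists s, covers f s.
Proof.
case=> s Hs; exists (List.nodup (@ddec T) s); split.
  exact: List.NoDup_nodup.
by move=> t /Hs; apply List.nodup_In.
Qed.

Lemma sum0_list T (s : seq T) (Q : pred T) (g : T -> A) :
  (forall y, List.In y s -> Q y -> g y = 0) -> \sum_(y <- s | Q y) g y = 0.
Proof.
elim: s => [|x s IH] H; first by rewrite big_nil.
rewrite big_cons IH; last by move=> y Hy; apply: H; right.
by case: ifP => // Qx; rewrite H //=; [rewrite addr0|left].
Qed.

Lemma eq_sum_list T (s : seq T) (Q : pred T) (g f : T -> A) :
  (forall y, List.In y s -> Q y -> g y = f y) ->
  \sum_(y <- s | Q y) g y = \sum_(y <- s | Q y) f y.
Proof.
elim: s => [|x s IH] H; first by rewrite !big_nil.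
rewrite !big_cons IH; last by move=> y Hy; apply: H; right.
by case: ifP => // Qx; rewrite H //; left.
Qed.

Lemma sum_nz_ex T (s : seq T) (Q : pred T) (g : T -> A) :
  \sum_(y <- s | Q y) g y != 0 -> exists y, [/\ List.In y s, Q y & g y != 0].
Proof.
move=> nz; case: (pselect (exists y, [/\ List.In y s, Q y & g y != 0])) => // H.
exfalso; move/eqP: nz; apply; apply: sum0_list => y Hy Qy.
by case: (eqVneq (g y) 0) => // gy; exfalso; apply: H; exists y.
Qed.

Lemma sum_cover T (f : T -> A) (P : pred T) s t :
  covers f s -> covers f t -> \sum_(x <- s | P x) f x = \sum_(x <- t | P x) f x.
Proof.
elim: s t f => [|x s IH] t f [Hs Cs] [Ht Ct].
  rewrite big_nil; symmetry; apply: sum0_list => y _ _.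
  by case: (eqVneq (f y) 0) => // /Cs.
move: Hs => /List.NoDup_cons_iff [xs Hs].
rewrite big_cons.
case: (eqVneq (f x) 0) => fx.
  rewrite fx; have -> : (if P x then 0 + \sum_(x0 <- s | P x0) f x0 else \sum_(x0 <- s | P x0) f x0) = \sum_(x0 <- s | P x0) f x0 by case: (P x); rewrite ?add0r.
  apply: IH => //; split => // y /[dup] fy /Cs [E|//].
  by rewrite -E fx eqxx in fy.
have [t1 [t2 Et]] := List.in_split _ _ (Ct _ fx).
have Ht' := Ht; rewrite Et in Ht'.
pose g y := if `[< y = x >] then 0 else f y.
have gf1 : forall y, List.In y s -> g y = f y.
  by move=> y ys; rewrite /g; case: asboolP => // E; rewrite E in ys.
have gf2 : forall y, List.In y (t1 ++ t2) -> g y = f y.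
  move=> y ys; rewrite /g; case: asboolP => // E; rewrite E in ys.
  by case: (List.NoDup_remove_2 _ _ _ Ht').
have gsub : forall y, g y != 0 -> y <> x /\ f y != 0.
  by move=> y; rewrite /g; case: asboolP => [_|E]; rewrite ?eqxx.
have := IH (t1 ++ t2) g.
rewrite (eq_sum_list (fun y ys _ => gf1 y ys)).
rewrite (eq_sum_list (fun y ys _ => gf2 y ys)) => ->; last first.
- split; first exact: (List.NoDup_remove_1 _ _ _ Ht').
  move=> y /gsub [yx /Ct]; rewrite Et => Hy.
  have [?|[?|?]] := List.in_app_or t1 (x :: t2) y Hy.
  + by apply: List.in_or_app; left.
  + by exfalso; apply: yx.
  + by apply: List.in_or_app; right.
- split => // y /gsub [yx /Cs [?|//]].
  by exfalso; apply: yx.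
rewrite Et !big_cat big_cons /=.
by case: (P x) => /=; [rewrite addrCA|].
Qed.

Lemma sum_single T (s : seq T) (Q : pred T) (a : T) (c : A) :
  List.NoDup s -> List.In a s ->
  \sum_(p <- s | Q p) (if `[< a = p >] then c else 0) = if Q a then c else 0.
Proof.
elim: s => [|b s IH] //= /List.NoDup_cons_iff [bs Hs] Ha.
rewrite big_cons.
case: (pselect (a = b)) => [E|ab].
  rewrite -E in bs *; rewrite sum0_list; last first.
    by move=> y ys _; case: asboolP => // E'; rewrite -E' in ys.
  by case: asboolP => // _; case: (Q a); rewrite ?addr0.
have as' : List.In a s by case: Ha => // E; exfalso; apply: ab.
rewrite IH //; case: asboolP => // _.
by case: (Q b); rewrite ?add0r.
Qed.

Definition addf (phi : A -> A) := forall a b, phi (a - b) = phi a - phi b.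

Lemma addf0 phi : addf phi -> phi 0 = 0.
Proof. by move=> H; have := H 0 0; rewrite [0 - 0]subrr => ->; rewrite subrr. Qed.

Lemma addf_sum phi T (s : seq T) (Q : pred T) (g : T -> A) : addf phi ->
  phi (\sum_(y <- s | Q y) g y) = \sum_(y <- s | Q y) phi (g y).
Proof.
move=> H; elim: s => [|x s IH]; first by rewrite !big_nil addf0.
rewrite !big_cons; case: (Q x) => //.
have HD : forall a b, phi (a + b) = phi a + phi b.
  have HN : forall b, phi (- b) = - phi b.
    by move=> b; rewrite -sub0r H addf0 // sub0r.
  by move=> a b; rewrite -{1}[b]opprK H HN opprK.
by rewrite HD IH.
Qed.

Lemma addf_id : addf id. Proof. by []. Qed.
Lemma addf_zero : addf (fun _ => 0). Proof. by move=> *; rewrite subrr. Qed.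

Lemma fin_supp_comb T (y1 y2 g : T -> A) phi1 phi2 :
  addf phi1 -> addf phi2 -> fin_supp y1 -> fin_supp y2 ->
  (forall t, g t = phi1 (y1 t) - phi2 (y2 t)) -> fin_supp g.
Proof.
move=> a1 a2 [s1 H1] [s2 H2] Hg; exists (s1 ++ s2) => t.
rewrite Hg => nz; apply: List.in_or_app.
case: (eqVneq (y1 t) 0) => e1; last by left; apply: H1.
case: (eqVneq (y2 t) 0) => e2; last by right; apply: H2.
by rewrite e1 e2 (addf0 a1) (addf0 a2) subrr eqxx in nz.
Qed.

Lemma sumrel_comb T (y1 y2 g : T -> A) (Q : pred T) a1 a2 phi1 phi2 :
  addf phi1 -> addf phi2 -> fin_supp y1 -> fin_supp y2 ->
  (forall t, g t = phi1 (y1 t) - phi2 (y2 t)) ->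
  (forall s, covers y1 s -> a1 = \sum_(t <- s | Q t) y1 t) ->
  (forall s, covers y2 s -> a2 = \sum_(t <- s | Q t) y2 t) ->
  forall s, covers g s -> phi1 a1 - phi2 a2 = \sum_(t <- s | Q t) g t.
Proof.
move=> ad1 ad2 [s1 H1] [s2 H2] Hg R1 R2 s Cs.
pose c := List.nodup (@ddec T) (s1 ++ s2).
have Nc : List.NoDup c by apply: List.NoDup_nodup.
have In1 : forall t, y1 t != 0 -> List.In t c.
  by move=> t /H1 ?; apply/List.nodup_In/List.in_or_app; left.
have In2 : forall t, y2 t != 0 -> List.In t c.
  by move=> t /H2 ?; apply/List.nodup_In/List.in_or_app; right.
have Cg : covers g c.
  split => // t; rewrite Hg => nz.
  case: (eqVneq (y1 t) 0) => e1; last by apply: In1.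
  case: (eqVneq (y2 t) 0) => e2; last by apply: In2.
  by rewrite e1 e2 (addf0 ad1) (addf0 ad2) subrr eqxx in nz.
rewrite (sum_cover Q Cs Cg) (R1 c) ?(R2 c); try by split.
rewrite (eq_sum_list (fun t _ _ => Hg t)) sumrB; congr (_ - _); exact: addf_sum.
Qed.

End Gen.

Section Struct.
Variables (C : category) (X : pdiagram C) (A : zmodType).
Implicit Types (u : lfamily X -> A) (w : fam_smash X A).

Lemma limsmash_comb u1 u2 g phi1 phi2 : addf phi1 -> addf phi2 ->
  limsmash u1 -> limsmash u2 -> (forall x, g x = phi1 (u1 x) - phi2 (u2 x)) ->
  limsmash g.
Proof.
move=> ad1 ad2 [b1 c1 f1] [b2 c2 f2] Hg; split.
- by rewrite Hg b1 b2 (addf0 ad1) (addf0 ad2) subrr.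
- move=> x; rewrite Hg => nz.
  case: (eqVneq (u1 x) 0) => e1; last exact: c1.
  case: (eqVneq (u2 x) 0) => e2; last exact: c2.
  by rewrite e1 e2 (addf0 ad1) (addf0 ad2) subrr eqxx in nz.
- exact: (fin_supp_comb ad1 ad2 f1 f2 Hg).
Qed.

Lemma rho_comb u1 u2 g w1 w2 h phi1 phi2 : addf phi1 -> addf phi2 ->
  limsmash u1 -> limsmash u2 -> rho_graph u1 w1 -> rho_graph u2 w2 ->
  (forall x, g x = phi1 (u1 x) - phi2 (u2 x)) ->
  (forall z, h z = phi1 (w1 z) - phi2 (w2 z)) -> rho_graph g h.
Proof.
move=> ad1 ad2 [_ _ f1] [_ _ f2] r1 r2 Hg Hh d.
have [p1 R1] := r1 d; have [p2 R2] := r2 d.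
split.
  by rewrite /comp_d Hh; rewrite /comp_d in p1 p2; rewrite p1 p2 (addf0 ad1) (addf0 ad2) subrr.
move=> p pp s Cs; rewrite Hh.
apply: (sumrel_comb (Q := fun x : lfamily X => `[< x d = p >]) ad1 ad2 f1 f2 Hg) => // s' Cs'.
  exact: R1.
exact: R2.
Qed.

Lemma limXA_comb w1 w2 h phi1 phi2 : addf phi1 -> addf phi2 ->
  limXA w1 -> limXA w2 -> (forall z, h z = phi1 (w1 z) - phi2 (w2 z)) -> limXA h.
Proof.
move=> ad1 ad2 [L1 P1] [L2 P2] Hh.
have pt0 : forall d, comp_d h (pt X d) = 0.
  move=> d; have [p1 _] := L1 d; have [p2 _] := L2 d.
  by rewrite /comp_d Hh; rewrite /comp_d in p1 p2; rewrite p1 p2 (addf0 ad1) (addf0 ad2) subrr.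
have fs : forall d, fin_supp (@comp_d _ _ _ h d).
  move=> d; have [_ f1] := L1 d; have [_ f2] := L2 d.
  exact: (fin_supp_comb ad1 ad2 f1 f2 (fun p => Hh _)).
split; first by move=> d; split.
move=> d d' f; split; first exact: pt0.
move=> p' pp' s Cs.
have [_ f1] := L1 d; have [_ f2] := L2 d.
have [_ R1] := P1 d d' f; have [_ R2] := P2 d d' f.
rewrite /comp_d Hh.
apply: (sumrel_comb (Q := fun p => `[< fmap X f p = p' >]) ad1 ad2 f1 f2 (fun p => Hh _)) => // s' Cs'.
  exact: R1.
exact: R2.
Qed.

Lemma ker_comb u1 u2 g phi1 phi2 : addf phi1 -> addf phi2 ->
  ker_rho u1 -> ker_rho u2 -> (forall x, g x = phi1 (u1 x) - phi2 (u2 x)) ->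
  ker_rho g.
Proof.
move=> ad1 ad2 [l1 r1] [l2 r2] Hg; split.
  exact: (limsmash_comb ad1 ad2 l1 l2 Hg).
apply: (rho_comb ad1 ad2 l1 l2 r1 r2 Hg) => z.
by rewrite (addf0 ad1) (addf0 ad2) subrr.
Qed.

Lemma im_comb w1 w2 h phi1 phi2 : addf phi1 -> addf phi2 ->
  im_rho w1 -> im_rho w2 -> (forall z, h z = phi1 (w1 z) - phi2 (w2 z)) -> im_rho h.
Proof.
move=> ad1 ad2 [u1 [l1 r1]] [u2 [l2 r2]] Hh.
exists (fun x => phi1 (u1 x) - phi2 (u2 x)); split.
  exact: (limsmash_comb ad1 ad2 l1 l2 (fun x => erefl)).
exact: (rho_comb ad1 ad2 l1 l2 r1 r2 (fun x => erefl) Hh).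
Qed.

Lemma limsmash0 : limsmash (fun _ : lfamily X => (0 : A)).
Proof. have F : forall t : lfamily X, (0:A) != 0 -> List.In t [::] by move=> t H; exfalso; move/negP: H; apply; apply/eqP.
split => //; first by move=> x H; exfalso; move/negP: H; apply; apply/eqP. by exists [::]. Qed.

Lemma rho0 : rho_graph (fun _ : lfamily X => (0 : A)) (fun _ => 0).
Proof. move=> d; split => // p _ s _; by rewrite sum0_list. Qed.

Lemma ker0 : ker_rho (fun _ : lfamily X => (0 : A)).
Proof. split; [exact: limsmash0 | exact: rho0]. Qed.

Lemma im0 : im_rho (fun _ : {d : C & X d} => (0 : A)).
Proof. by exists (fun _ => 0); split; [exact: limsmash0 | exact: rho0]. Qed.

Lemma im_limXA w : im_rho w -> limXA w.
Proof.
case=> u [[u0 ucomp fu] R].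
have [t [Nt Ct]] := fin_cover fu.
pose sd d := List.nodup (@ddec (X d)) (map (fun x : lfamily X => x d) t).
have Cov : forall d, covers (@comp_d _ _ _ w d) (sd d).
  move=> d; split; first exact: List.NoDup_nodup.
  move=> p nz; have [p0 Rd] := R d.
  have pp : p <> pt X d by move=> E; rewrite E p0 eqxx in nz.
  move: nz; rewrite /comp_d (Rd p pp t (conj Nt Ct)) => nz.
  have [x [xt /asboolP xdp _]] := sum_nz_ex nz.
  apply/List.nodup_In; apply/List.in_map_iff; exists x; split => //.
split.
  move=> d; split; first by have [] := R d.
  by exists (sd d); exact: (Cov d).2.
move=> d d' f; split; first by have [] := R d'.
move=> p' pp' s Cs.
rewrite (sum_cover _ Cs (Cov d)).
have [_ Rd] := R d; have [_ Rd'] := R d'.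
rewrite /comp_d (Rd' p' pp' t (conj Nt Ct)).
transitivity (\sum_(p <- sd d | `[< fmap X f p = p' >])
                \sum_(x <- t) (if `[< x d = p >] then u x else 0)); last first.
  apply: eq_sum_list => p _ /asboolP fp.
  have pp : p <> pt X d by move=> E; apply: pp'; rewrite -fp E fmap_pt.
  by rewrite (Rd p pp t (conj Nt Ct)) -big_mkcond.
rewrite exchange_big /= big_mkcond.
apply: eq_sum_list => x xt _.
rewrite sum_single; first last.
- by apply/List.nodup_In; apply/List.in_map_iff; exists x.
- exact: List.NoDup_nodup.
case: (eqVneq (u x) 0) => [->|nz]; first by case: asboolP; case: asboolP.
by rewrite (ucomp x nz d d' f).
Qed.

End Struct.

Section Alg.
Variable A : zmodType.

Lemma addfD (phi : A -> A) : addf phi -> forall a b, phi (a + b) = phi a + phi b.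
Proof.
move=> H.
have HN : forall b, phi (- b) = - phi b.
  by move=> b; rewrite -sub0r H addf0 // sub0r.
by move=> a b; rewrite -{1}[b]opprK H HN opprK.
Qed.

Lemma addf_natmul (phi : A -> A) n a : addf phi -> phi (a *+ n) = phi a *+ n.
Proof.
move=> H; elim: n => [|n IH]; first by rewrite !mulr0n addf0.
by rewrite !mulrS addfD // IH.
Qed.

Lemma addf_opp : addf (fun a : A => - a). Proof. by move=> a b; rewrite opprD. Qed.
Lemma addf_mulrn n : addf (fun a : A => a *+ n). Proof. by move=> a b; rewrite mulrnBl. Qed.

Lemma sg_sub (S : A -> Prop) x y : subgroup S -> S x -> S y -> S (x - y).
Proof. by case=> _ H; apply: H. Qed.
Lemma sg0 (S : A -> Prop) : subgroup S -> S 0.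
Proof. by case. Qed.

Lemma proj_ex (UA BA : A -> Prop) : subgroup UA -> subgroup BA ->
  (forall k, whole k -> exists u b, [/\ UA u, BA b & k = u + b]) ->
  (forall x, UA x -> BA x -> zero_sg x) ->
  exists pU pB : A -> A, [/\ addf pU, addf pB, (forall a, a = pU a + pB a),
    (forall a, UA (pU a) /\ BA (pB a)) &
    (forall a, (UA a -> pU a = a /\ pB a = 0) /\ (BA a -> pU a = 0 /\ pB a = a))].
Proof.
move=> sU sB Hdec Hint.
have ex : forall a, exists p : A * A, [/\ UA p.1, BA p.2 & a = p.1 + p.2].
  by move=> a; have [u [b [? ? ?]]] := Hdec a I; exists (u, b).
have [pr Hpr] := choice ex.
have uniq : forall u b u' b', UA u -> BA b -> UA u' -> BA b' -> u + b = u' + b' ->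
    u = u' /\ b = b'.
  move=> u b u' b' Uu Bb Uu' Bb' e.
  have h0 : (u - u') + (b - b') = 0 by rewrite -addrACA -opprD e subrr.
  have h1 : u - u' = b' - b by apply/eqP; rewrite -[b' - b]opprB -addr_eq0 h0.
  have z : zero_sg (u - u').
    by apply: Hint; [exact: sg_sub | rewrite h1; exact: sg_sub].
  rewrite /zero_sg in z; split; first exact: subr0_eq.
  by symmetry; apply: subr0_eq; rewrite -h1.
exists (fun a => (pr a).1), (fun a => (pr a).2).
have lin : forall a b, (pr (a - b)).1 = (pr a).1 - (pr b).1 /\
                       (pr (a - b)).2 = (pr a).2 - (pr b).2.
  move=> a b; have [Ua Ba ea] := Hpr a; have [Ub Bb eb] := Hpr b.
  have [Uab Bab eab] := Hpr (a - b).
  apply: uniq => //; try exact: sg_sub.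
  by rewrite -eab addrACA -opprD -ea -eb.
split.
- by move=> a b; case: (lin a b).
- by move=> a b; case: (lin a b).
- by move=> a; case: (Hpr a).
- by move=> a; case: (Hpr a).
move=> a; have [Ua Ba ea] := Hpr a; split => Ha.
  by apply: uniq => //; [exact: sg0 | rewrite -ea addr0].
by apply: uniq => //; [exact: sg0 | rewrite -ea add0r].
Qed.

Lemma div_ex (UA : A -> Prop) n (pU : A -> A) : (0 < n)%N -> subgroup UA ->
  sq_uniq_div UA (@zero_sg A) -> addf pU -> (forall a, UA (pU a)) ->
  exists phi, [/\ addf phi, forall a, UA (phi a), forall a, phi a *+ n = pU a
                & forall a, phi (a *+ n) = pU a].
Proof.
move=> n0 sU /(_ n n0) [Hs Hi] adU UpU.
have inj : forall x y, UA x -> UA y -> x *+ n = y *+ n -> x = y.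
  move=> x y Ux Uy e; apply: subr0_eq; apply: Hi => //.
  by rewrite /zero_sg e subrr.
have ex : forall a, exists a', UA a -> UA a' /\ a' *+ n = a.
  move=> a; case: (pselect (UA a)) => [Ua|nUa]; last by exists a.
  have [a' [Ua' e]] := Hs a Ua; exists a' => _; split => //.
  exact: subr0_eq.
have [dv Hdv] := choice ex.
have Udv : forall a, UA (dv (pU a)) by move=> a; case: (Hdv (pU a) (UpU a)).
have E1 : forall a, dv (pU a) *+ n = pU a by move=> a; case: (Hdv (pU a) (UpU a)).
exists (fun a => dv (pU a)); split => //.
- move=> a b; apply: inj; [exact: Udv | apply: sg_sub => //; exact: Udv |].
  by rewrite mulrnBl !E1 adU.
- move=> a; apply: inj; [exact: Udv | exact: UpU |].
  by rewrite E1 addf_natmul.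
Qed.

Lemma ud_div n : (0 < n)%N -> sq_uniq_div (@whole A) (@zero_sg A) ->
  exists dv : A -> A, [/\ addf dv, (forall a, dv a *+ n = a) & (forall a, dv (a *+ n) = a)].
Proof.
move=> n0 Hud.
have sW : subgroup (@whole A) by [].
have [phi [ad _ E1 E2]] := @div_ex (@whole A) n id n0 sW Hud (@addf_id A) (fun _ => I).
by exists phi.
Qed.

End Alg.

Lemma fsubE (T : Type) (A : zmodType) (f g : T -> A) x : (f - g) x = f x - g x.
Proof. by []. Qed.
Lemma faddE (T : Type) (A : zmodType) (f g : T -> A) x : (f + g) x = f x + g x.
Proof. by []. Qed.
Lemma f0E (T : Type) (A : zmodType) x : (0 : T -> A) x = 0.
Proof. by []. Qed.

Theorem mainTheorem6 (C : category) (X : pdiagram C) (A : zmodType) :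
  (* (1) *)
  (forall m : nat, sq_bounded m (@whole A) (@zero_sg A) ->
     sq_bounded m (@ker_rho C X A) (@zero_sg (@lfamily C X -> A)) /\
     sq_bounded m (@limXA C X A) (@im_rho C X A)) /\
  (* (2) *)
  (sq_uniq_div (@whole A) (@zero_sg A) ->
     sq_uniq_div (@ker_rho C X A) (@zero_sg (@lfamily C X -> A)) /\
     sq_uniq_div (@limXA C X A) (@im_rho C X A)) /\
  (* (3) *)
  (sq_almost_ud (@whole A) (@zero_sg A) ->
     sq_almost_ud (@ker_rho C X A) (@zero_sg (@lfamily C X -> A)) /\
     sq_almost_ud (@limXA C X A) (@im_rho C X A)).
Proof.
have a0 := @addf_zero A; have aid := @addf_id A.
split; [|split].
- move=> m Hm; split.
  + move=> k _; rewrite /zero_sg natmulfctE; apply: funext => x /=.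
    exact: (Hm (k x) I).
  + move=> w _; rewrite natmulfctE.
    have -> : (fun x => w x *+ m) = (fun _ => 0) by apply: funext => x; exact: (Hm (w x) I).
    exact: im0.
- move=> Hud; split.
  + move=> n n0; have [dv [ad E1 E2]] := ud_div n0 Hud; split.
    * move=> k kk; exists (fun x => dv (k x)); split.
        by apply: (ker_comb ad a0 kk kk) => x; rewrite subr0.
      by rewrite /zero_sg natmulfctE; apply: funext => x; rewrite fsubE f0E E1 subrr.
    * move=> k1 k2 _ _; rewrite /zero_sg !natmulfctE => e; apply: funext => x.
      have ex := congr1 (fun f => f x) e; rewrite /= fsubE f0E /= in ex.
      by rewrite fsubE f0E -(E2 (k1 x)) -(E2 (k2 x)) -ad ex (addf0 ad).
  + move=> n n0; have [dv [ad E1 E2]] := ud_div n0 Hud; split.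
    * move=> w ww; exists (fun z => dv (w z)); split.
        by apply: (limXA_comb ad a0 ww ww) => z; rewrite subr0.
      have -> : (fun z => dv (w z)) *+ n - w = (fun _ => 0).
        by rewrite natmulfctE; apply: funext => z; rewrite fsubE /= E1 subrr.
      exact: im0.
    * move=> w1 w2 _ _ H; apply: (im_comb ad a0 H H) => z.
      by rewrite !natmulfctE !fsubE /= subr0 ad !E2.
- move=> [UA [BA [[sU sB] [HUB _] Hdec Hint [udU [mB [m0 bB]]]]]].
  have [pU [pB [adU adB dec UB fixp]]] := proj_ex sU sB Hdec Hint.
  have aop := @addf_opp A.
  have pBU : forall a, pB (pU a) = 0 by move=> a; case: (fixp (pU a)) => H _; case: (H (UB a).1).
  have pUB : forall a, pU (pB a) = 0 by move=> a; case: (fixp (pB a)) => _ H; case: (H (UB a).2).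
  split.
  + exists (fun k => ker_rho k /\ forall x, UA (k x)), (fun k => ker_rho k /\ forall x, BA (k x)).
    split.
    * split; split.
      - by split; [exact: ker0 | move=> x; exact: sg0].
      - move=> k1 k2 [h1 u1] [h2 u2]; split; last by move=> x; apply: sg_sub.
        exact: (ker_comb aid aid h1 h2 (fun x => erefl)).
      - by split; [exact: ker0 | move=> x; exact: sg0].
      - move=> k1 k2 [h1 u1] [h2 u2]; split; last by move=> x; apply: sg_sub.
        exact: (ker_comb aid aid h1 h2 (fun x => erefl)).
    * split; last by move=> k [[]|[]].
      move=> k ->; split; (split; [exact: ker0 | move=> x; exact: sg0]).
    * move=> k kk; exists (fun x => pU (k x)), (fun x => pB (k x)); split.
      - split; last by move=> x; case: (UB (k x)).
        by apply: (ker_comb adU a0 kk kk) => x; rewrite subr0.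
      - split; last by move=> x; case: (UB (k x)).
        by apply: (ker_comb adB a0 kk kk) => x; rewrite subr0.
      - by apply: funext => x; rewrite faddE /= -dec.
    * move=> k [_ ku] [_ kb]; apply: funext => x; exact: (Hint _ (ku x) (kb x)).
    * split.
      - move=> n n0; have [phi [adp Up Ep1 Ep2]] := div_ex n0 sU udU adU (fun a => (UB a).1).
        split.
        + move=> k [kk ku]; exists (fun x => phi (k x)); split.
            split; last by move=> x; exact: Up.
            by apply: (ker_comb adp a0 kk kk) => x; rewrite subr0.
          rewrite /zero_sg natmulfctE; apply: funext => x; rewrite fsubE f0E /= Ep1.
          by case: (fixp (k x)) => H _; case: (H (ku x)) => -> _; rewrite subrr.
        + move=> k1 k2 [_ u1] [_ u2]; rewrite /zero_sg !natmulfctE => e.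
          apply: funext => x; have ex := congr1 (fun f => f x) e.
          rewrite /= fsubE f0E /= in ex; rewrite fsubE f0E.
          by have [_ H] := udU n n0; apply: H (u1 x) (u2 x) _.
      - exists mB; split => // k [_ kb]; rewrite /zero_sg natmulfctE.
        by apply: funext => x; exact: bB.
  + have limXA0 : limXA (fun _ : {d : C & X d} => (0 : A)) by apply: im_limXA; exact: im0.
    have imB0 : forall w : fam_smash X A, (forall z, pB (w z) = 0) -> im_rho (fun z => pB (w z)).
      move=> w H; have -> : (fun z => pB (w z)) = (fun _ => 0) by apply: funext.
      exact: im0.
    have imU0 : forall w : fam_smash X A, (forall z, pU (w z) = 0) -> im_rho (fun z => pU (w z)).
      move=> w H; have -> : (fun z => pU (w z)) = (fun _ => 0) by apply: funext.
      exact: im0.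
    exists (fun w => limXA w /\ im_rho (fun z => pB (w z))),
           (fun w => limXA w /\ im_rho (fun z => pU (w z))).
    split.
    * split; split.
      - by split => //; apply: imB0 => z; exact: (addf0 adB).
      - move=> w1 w2 [l1 i1] [l2 i2]; split.
          exact: (limXA_comb aid aid l1 l2 (fun z => erefl)).
        by apply: (im_comb aid aid i1 i2) => z /=; rewrite adB.
      - by split => //; apply: imU0 => z; exact: (addf0 adU).
      - move=> w1 w2 [l1 i1] [l2 i2]; split.
          exact: (limXA_comb aid aid l1 l2 (fun z => erefl)).
        by apply: (im_comb aid aid i1 i2) => z /=; rewrite adU.
    * split; last by move=> w [[]|[]].
      move=> w iw; have lw := im_limXA iw; split; split => //.
        by apply: (im_comb adB a0 iw iw) => z; rewrite subr0.
      by apply: (im_comb adU a0 iw iw) => z; rewrite subr0.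
    * move=> w lw; exists (fun z => pU (w z)), (fun z => pB (w z)); split.
      - split; first by apply: (limXA_comb adU a0 lw lw) => z; rewrite subr0.
        by apply: (imB0 (fun z => pU (w z))) => z; exact: pBU.
      - split; first by apply: (limXA_comb adB a0 lw lw) => z; rewrite subr0.
        by apply: (imU0 (fun z => pB (w z))) => z; exact: pUB.
      - by apply: funext => z; rewrite faddE /= -dec.
    * move=> w [_ iB] [_ iU]; apply: (im_comb aid aop iU iB) => z /=.
      by rewrite opprK -dec.
    * split.
      - move=> n n0; have [phi [adp Up Ep1 Ep2]] := div_ex n0 sU udU adU (fun a => (UB a).1).
        split.
        + move=> w [lw iB]; exists (fun z => phi (w z)); split.
            split; first by apply: (limXA_comb adp a0 lw lw) => z; rewrite subr0.
            by apply: imB0 => z; case: (fixp (phi (w z))) => H _; case: (H (Up _)).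
          apply: (im_comb a0 aid iB iB) => z.
          by rewrite natmulfctE fsubE /= Ep1 {2}[w z]dec opprD addrA subrr.
        + move=> w1 w2 [l1 iB1] [l2 iB2] H.
          have iU : im_rho (fun z => pU (w1 z) - pU (w2 z)).
            apply: (im_comb adp a0 H H) => z.
            by rewrite !natmulfctE /= subr0 adp !Ep2.
          have iBd : im_rho (fun z => pB (w1 z) - pB (w2 z)).
            exact: (im_comb aid aid iB1 iB2 (fun z => erefl)).
          apply: (im_comb aid aop iU iBd) => z /=.
          by rewrite opprK fsubE {1}[w1 z]dec {1}[w2 z]dec opprD addrACA.
      - exists mB; split => // w [_ iU].
        apply: (im_comb (addf_mulrn mB) a0 iU iU) => z.
        rewrite natmulfctE /= subr0 {1}[w z]dec mulrnDl.
        by have -> := bB (pB (w z)) ((UB _).2); rewrite addr0.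
Qed.
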